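(* The series below converge and $$\sum_{n=0}^{\infty}\left(e^{-1}n!-D_n\right)=e^{-1}\int_0^{-1}\frac{e^{-t}}{1-t}\,dt=e^{-1}\sum_{n=0}^{\infty}D_n\frac{(-1)^{n+1}}{(n+1)!}.$$
   Context: $D_n=n!\sum_{k=0}^{n}\frac{(-1)^k}{k!}$ are the derangement numbers ($n\ge0$). Note $e^{-1}n!-D_n=n!\left(e^{-1}-\sum_{k=0}^n\frac{(-1)^k}{k!}\right)$. *)

(* Defs.v *)
From Stdlib Require Import Reals.
From Coquelicot Require Import Coquelicot.
Open Scope R_scope.

Definition derangement (n : nat) : R :=
  INR (Factorial.fact n) * sum_f_R0 (fun k => (-1) ^ k / INR (Factorial.fact k)) n.

(* Main.v *)
From Stdlib Require Import Reals Lra.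
From Coquelicot Require Import Coquelicot.
Require Import Defs.
Open Scope R_scope.
Definition T (x : R) (n : nat) : R := sum_f_R0 (fun k => x ^ k / INR (Factorial.fact k)) n.
Lemma is_RInt_val (f : R -> R) a b l l' : is_RInt f a b l -> l = l' -> is_RInt f a b l'.
Proof. intros H ->; exact H. Qed.
Lemma ext_R (f h : R -> R) a b l : (forall x, Rmin a b < x < Rmax a b -> f x = h x) -> is_RInt f a b l -> is_RInt h a b l.
Proof. apply is_RInt_ext. Qed.
Lemma cont_of_der (f : R -> R) x : ex_derive f x -> continuous f x.
Proof. intros H. exact (@ex_derive_continuous R_AbsRing R_NormedModule f x H). Qed.
Lemma taylor x n : is_RInt (fun s => (x - s) ^ n * exp s) 0 x (INR (Factorial.fact n) * (exp x - T x n)).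
Proof.
  induction n as [|n IH].
  - apply is_RInt_val with (l := minus (exp x) (exp 0)).
    + apply (is_RInt_derive exp).
      * intros s _. auto_derive; auto.
      * intros s _. apply cont_of_der. auto_derive; auto.
    + unfold T, minus, plus, opp; simpl. rewrite exp_0. field.
  - set (G := fun s => (x - s) ^ (S n) * exp s).
    set (dG := fun s => (x - s) ^ (S n) * exp s - INR (S n) * ((x - s) ^ n * exp s)).
    assert (H1 : is_RInt dG 0 x (minus (G x) (G 0))).
    { apply (is_RInt_derive G).
      * intros s _. unfold G, dG. auto_derive; auto.
        change (match n with 0%nat => 1 | S _ => INR n + 1 end) with (INR (S n)).
        cbn [pow]. change (x + - s) with (x - s). ring.
      * intros s _. apply cont_of_der. unfold dG. auto_derive; auto. }
    pose proof (is_RInt_plus _ _ _ _ _ _ H1 (is_RInt_scal _ _ _ (INR (S n)) _ IH)) as H2.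
    eapply is_RInt_val.
    + eapply ext_R; [|exact H2]. intros s _. unfold dG, plus, scal; simpl. unfold mult; simpl. change (match n with 0%nat => 1 | S _ => INR n + 1 end) with (INR (S n)). unfold G. cbn [pow]. ring.
    + unfold T. cbn [sum_f_R0]. fold (T x n). rewrite fact_simpl, mult_INR.
      unfold G, minus, plus, opp, scal; simpl; unfold mult; simpl.
      change (match n with 0%nat => 1 | S _ => INR n + 1 end) with (INR (S n)).
      assert (Hf := INR_fact_neq_0 n). assert (Hs : INR (S n) <> 0) by (apply not_0_INR; discriminate).
      replace (x - x) with 0 by ring. replace (x - 0) with x by ring. rewrite exp_0.
      cbn [pow]. field. auto.
Qed.

Lemma exp_mono x y : x <= y -> exp x <= exp y.
Proof. intros H. destruct (Rle_lt_or_eq_dec _ _ H) as [H1|H1]. left; now apply exp_increasing. subst; lra. Qed.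

Lemma taylor_bound x n : Rabs x <= 1 -> Rabs (exp x - T x n) <= 3 * Rabs x ^ (S n).
Proof.
  intros Hx.
  pose proof (taylor x n) as H.
  assert (Hf := INR_fact_neq_0 n). assert (Hf1 : 1 <= INR (Factorial.fact n)).
  { apply (le_INR 1). apply Factorial.lt_O_fact. }
  assert (Hpt : forall s, Rmin 0 x <= s <= Rmax 0 x -> Rabs ((x - s) ^ n * exp s) <= Rabs x ^ n * 3).
  { intros s Hs. rewrite Rabs_mult, <- RPow_abs, (Rabs_pos_eq (exp s)) by (left; apply exp_pos).
    apply Rmult_le_compat; try apply pow_le; try apply Rabs_pos; try (left; apply exp_pos).
    - apply pow_incr. split. apply Rabs_pos. unfold Rmin, Rmax in Hs. destruct (Rle_dec 0 x);
      unfold Rabs; repeat destruct Rcase_abs; lra.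
    - apply Rle_trans with (exp 1). apply exp_mono. unfold Rmin, Rmax in Hs. destruct (Rle_dec 0 x);
      unfold Rabs in Hx; destruct Rcase_abs; lra. apply exp_le_3. }
  assert (HL : Rabs (INR (Factorial.fact n) * (exp x - T x n)) <= Rabs x * (Rabs x ^ n * 3)).
  { destruct (Rle_dec 0 x) as [Hx0|Hx0].
    - assert (B := norm_RInt_le_const (V:=R_NormedModule) (fun s => (x - s) ^ n * exp s) 0 x (INR (Factorial.fact n) * (exp x - T x n)) (Rabs x ^ n * 3) Hx0).
      replace (Rabs x) with (x - 0) at 1 by (rewrite Rabs_pos_eq; lra).
      apply B; auto. intros s Hs. apply Hpt. rewrite Rmin_left, Rmax_right; lra.
    - apply is_RInt_swap in H.
      assert (B := norm_RInt_le_const (V:=R_NormedModule) (fun s => (x - s) ^ n * exp s) x 0 (opp (INR (Factorial.fact n) * (exp x - T x n))) (Rabs x ^ n * 3) ltac:(lra)).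
      replace (Rabs x) with (0 - x) at 1 by (rewrite Rabs_left; lra).
      rewrite <- Rabs_Ropp. apply B; auto. intros s Hs. apply Hpt. rewrite Rmin_right, Rmax_left; lra. }
  rewrite Rabs_mult, (Rabs_pos_eq (INR _)) in HL by lra.
  cbn [pow].
  assert (0 <= Rabs x * (Rabs x ^ n * 3)) by (apply Rmult_le_pos; [apply Rabs_pos| apply Rmult_le_pos; [apply pow_le, Rabs_pos|lra]]).
  assert (Rabs (exp x - T x n) <= INR (Factorial.fact n) * Rabs (exp x - T x n)).
  { pose proof (Rabs_pos (exp x - T x n)). nra. }
  nra.
Qed.

Lemma int_bound (h k : R -> R) a b K : a <= b -> ex_RInt h a b -> is_RInt k a b K ->
  (forall t, a <= t <= b -> Rabs (h t) <= k t) -> Rabs (RInt h a b) <= K.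
Proof.
  intros Hab Hh Hk Hb.
  assert (Ek : ex_RInt k a b) by (exists K; exact Hk).
  assert (Hk' : is_RInt (fun y => - k y) a b (- K)) by exact (is_RInt_opp _ _ _ _ Hk).
  assert (Ek' : ex_RInt (fun y => - k y) a b) by (eexists; exact Hk').
  assert (R1 : RInt h a b <= RInt k a b).
  { apply RInt_le; auto. intros t Ht. specialize (Hb t ltac:(lra)). unfold Rabs in Hb; destruct Rcase_abs in Hb; lra. }
  assert (R2 : RInt (fun y => - k y) a b <= RInt h a b).
  { apply RInt_le; auto. intros t Ht. specialize (Hb t ltac:(lra)). unfold Rabs in Hb; destruct Rcase_abs in Hb;
    lra. }
  rewrite (is_RInt_unique _ _ _ _ Hk) in R1. rewrite (is_RInt_unique _ _ _ _ Hk') in R2.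
  apply Rabs_le. lra.
Qed.

Lemma int_bound_rev (h k : R -> R) K : ex_RInt h 0 (-1) -> is_RInt k (-1) 0 K ->
  (forall t, -1 <= t <= 0 -> Rabs (h t) <= k t) -> Rabs (RInt h 0 (-1)) <= K.
Proof.
  intros Hh Hk Hb.
  rewrite <- (opp_RInt_swap h (-1) 0) by (now apply ex_RInt_swap).
  unfold opp; simpl. rewrite Rabs_Ropp. apply int_bound with k; auto. lra. now apply ex_RInt_swap.
Qed.

Lemma int_pow_shift N : is_RInt (fun s => (1 + s) ^ S N) (-1) 0 (1 / (INR N + 2)).
Proof.
  eapply is_RInt_val.
  - apply (is_RInt_derive (fun s => (1 + s) ^ S (S N) / INR (S (S N)))).
    + intros s _. auto_derive; auto.
      change (match N with 0%nat => 1 | S _ => INR N + 1 end) with (INR (S N)). 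
      change (INR (S N) + 1) with (INR (S (S N))). cbn [pow]. field. apply not_0_INR; discriminate.
    + intros s _. apply cont_of_der. auto_derive. auto.
  - unfold minus, plus, opp; simpl.
    change (match N with 0%nat => 1 | S _ => INR N + 1 end) with (INR (S N)). rewrite S_INR.
    replace (1 + 0) with 1 by ring. replace (1 + -1) with 0 by ring.
    rewrite pow1. field. pose proof (pos_INR N). lra.
Qed.

Lemma int_pow_neg N : is_RInt (fun s => 7 * (- s) ^ S N) (-1) 0 (7 / (INR N + 2)).
Proof.
  eapply is_RInt_val.
  - apply (is_RInt_derive (fun s => - 7 * (- s) ^ S (S N) / INR (S (S N)))).
    + intros s _. auto_derive; auto.
      change (match N with 0%nat => 1 | S _ => INR N + 1 end) with (INR (S N)). 
      change (INR (S N) + 1) with (INR (S (S N))). cbn [pow]. field. apply not_0_INR; discriminate.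
    + intros s _. apply cont_of_der. auto_derive. auto.
  - unfold minus, plus, opp; simpl.
    change (match N with 0%nat => 1 | S _ => INR N + 1 end) with (INR (S N)). rewrite S_INR.
    replace (- 0) with 0 by ring. replace (- -1) with 1 by ring.
    rewrite pow1. field. pose proof (pos_INR N). lra.
Qed.

Lemma lim_inv2 : is_lim_seq (fun N => / (INR N + 2)) 0.
Proof.
  assert (H : is_lim_seq (fun N => INR N + 2) p_infty).
  { eapply is_lim_seq_plus. apply is_lim_seq_INR. apply is_lim_seq_const. simpl. reflexivity. }
  apply is_lim_seq_inv in H. simpl in H. exact H. discriminate.
Qed.
Lemma lim_Cinv2 C : is_lim_seq (fun N => C * / (INR N + 2)) 0.
Proof.
  pose proof (is_lim_seq_scal_l _ C _ lim_inv2) as H. simpl in H. rewrite Rmult_0_r in H. exact H.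
Qed.
Lemma lim_helper (s : nat -> R) L C : (forall N, Rabs (s N - L) <= C / (INR N + 2)) -> is_lim_seq s L.
Proof.
  intros H.
  assert (Hv : is_lim_seq (fun N => s N - L) 0).
  { apply is_lim_seq_le_le with (u := fun N => - (C * / (INR N + 2))) (w := fun N => C * / (INR N + 2)).
    - intros N. specialize (H N). unfold Rdiv in H. apply Rabs_le_between' in H. lra.
    - pose proof (proj1 (is_lim_seq_opp _ _) (lim_Cinv2 C)) as H1. simpl in H1. rewrite Ropp_0 in H1. exact H1.
    - apply lim_Cinv2. }
  apply is_lim_seq_ext with (u := fun N => (s N - L) + L). intros; ring.
  pose proof (is_lim_seq_plus' _ _ _ _ Hv (is_lim_seq_const L)) as H2.
  rewrite Rplus_0_l in H2. exact H2.
Qed.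
Lemma ser (a : nat -> R) (L : R) : is_lim_seq (sum_n a) L -> is_series a L.
Proof. intros H. exact H. Qed.

Definition g (s : R) := exp s / (2 + s).
Definition fI (t : R) := exp (- t) / (1 - t).
Definition afun (n : nat) := exp (-1) * INR (Factorial.fact n) - derangement n.

Lemma a_eq n : afun n = INR (Factorial.fact n) * (exp (-1) - T (-1) n).
Proof. unfold afun, derangement, T. ring. Qed.

Lemma P1 N : is_RInt (fun s => g s * (1 - (-1 - s) ^ S N)) 0 (-1) (sum_n afun N).
Proof.
  induction N as [|N IH].
  - rewrite sum_O, a_eq. eapply ext_R; [| exact (taylor (-1) 0)].
    intros s Hs. rewrite Rmin_right, Rmax_left in Hs by lra. unfold g. cbn [pow]. field. lra.
  - rewrite sum_Sn, a_eq.
    pose proof (is_RInt_plus _ _ _ _ _ _ IH (taylor (-1) (S N))) as H.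
    eapply ext_R; [|exact H].
    intros s Hs. rewrite Rmin_right, Rmax_left in Hs by lra. unfold plus; simpl. unfold g. cbn [pow]. field. lra.
Qed.

Lemma ex_der_R (f : R -> R) a b : (forall z, Rmin a b <= z <= Rmax a b -> ex_derive f z) -> ex_RInt f a b.
Proof. intros H. apply (@ex_RInt_continuous R_CompleteNormedModule). intros z Hz. apply cont_of_der. auto. Qed.

Lemma ex_g : ex_RInt g 0 (-1).
Proof.
  apply ex_der_R. intros z Hz. rewrite Rmin_right, Rmax_left in Hz by lra. unfold g. auto_derive. lra.
Qed.

Lemma ex_fI : ex_RInt fI 0 (-1).
Proof.
  apply ex_der_R. intros z Hz. rewrite Rmin_right, Rmax_left in Hz by lra. unfold fI. auto_derive. lra.
Qed.

Lemma g_bound s : -1 <= s <= 0 -> Rabs (g s) <= 1.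
Proof.
  intros Hs. unfold g, Rdiv.
  assert (E1 : exp s <= 1) by (rewrite <- exp_0; apply exp_mono; lra).
  assert (E0 := exp_pos s).
  assert (I1 : 0 < / (2 + s) <= 1).
  { split. apply Rinv_0_lt_compat; lra. rewrite <- Rinv_1. apply Rinv_le_contravar; lra. }
  rewrite Rabs_pos_eq by nra. nra.
Qed.

Lemma is_RInt_minus_R (f h : R -> R) a b If Ih : is_RInt f a b If -> is_RInt h a b Ih ->
  is_RInt (fun x => f x - h x) a b (If - Ih).
Proof. intros H1 H2. apply (is_RInt_minus f h a b If Ih H1 H2). Qed.

Lemma part1_lim : is_lim_seq (sum_n afun) (RInt g 0 (-1)).
Proof.
  apply lim_helper with (C := 1). intros N. rewrite Rabs_minus_sym.
  pose proof (is_RInt_minus_R _ _ _ _ _ _ (RInt_correct _ _ _ ex_g) (P1 N)) as HM.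
  rewrite <- (is_RInt_unique _ _ _ _ HM).

  apply int_bound_rev with (k := fun s => (1 + s) ^ S N).
  - eexists; exact HM.
  - apply int_pow_shift.
  - intros t Ht.
    replace (g t - g t * (1 - (-1 - t) ^ S N)) with (g t * (-1 - t) ^ S N) by ring.
    rewrite Rabs_mult, <- RPow_abs.
    replace (Rabs (-1 - t)) with (1 + t) by (rewrite Rabs_left1; lra).
    pose proof (g_bound t Ht). pose proof (pow_le (1 + t) (S N) ltac:(lra)).
    rewrite <- (Rmult_1_l ((1 + t) ^ S N)) at 2. apply Rmult_le_compat_r; auto.
Qed.

Lemma change_var : RInt g 0 (-1) = exp (-1) * RInt fI 0 (-1).
Proof.
  pose proof (RInt_correct _ _ _ ex_g) as H.
  pose proof (is_RInt_comp_lin g (-1) (-1) (-1) 0 (RInt g 0 (-1))) as H1.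
  replace (-1 * -1 + -1) with 0 in H1 by ring. replace (-1 * 0 + -1) with (-1) in H1 by ring.
  specialize (H1 H). apply is_RInt_swap in H1.
  assert (H1b : is_RInt (fun y => - g (-1 * y + -1)) 0 (-1) (- RInt g 0 (-1))).
  { eapply is_RInt_val; [eapply ext_R; [|exact H1]|].
    - intros y _. unfold scal; simpl; unfold mult; simpl. ring.
    - reflexivity. }
  pose proof (is_RInt_opp _ _ _ _ (is_RInt_scal _ _ _ (exp (-1)) _ (RInt_correct _ _ _ ex_fI))) as H2.
  assert (H2b : is_RInt (fun y => - g (-1 * y + -1)) 0 (-1) (- (exp (-1) * RInt fI 0 (-1)))).
  { eapply is_RInt_val; [eapply ext_R; [|exact H2]|].
    - intros y Hy. rewrite Rmin_right, Rmax_left in Hy by lra.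
      unfold scal, opp; simpl; unfold mult; simpl. unfold g, fI.
      replace (-1 * y + -1) with (-1 + - y) by ring. rewrite exp_plus.
      replace (2 + (-1 + - y)) with (1 - y) by ring. field. lra.
    - reflexivity. }
  pose proof (is_RInt_unique _ _ _ _ H1b) as U1. pose proof (is_RInt_unique _ _ _ _ H2b) as U2.
  lra.
Qed.

Definition bfun (n : nat) := derangement n * (-1) ^ (n + 1) / INR (Factorial.fact (n + 1)).
Definition PN (N : nat) (t : R) := sum_f_R0 (fun n => T (-1) n * t ^ n) N.

Lemma b_eq n : bfun n = T (-1) n * ((-1) ^ (S n) / INR (S n)).
Proof.
  unfold bfun, derangement. rewrite Nat.add_1_r, fact_simpl, mult_INR.
  change (sum_f_R0 (fun k : nat => (-1) ^ k / INR (Factorial.fact k)) n) with (T (-1) n).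
  assert (Hf := INR_fact_neq_0 n). assert (Hs : INR (S n) <> 0) by (apply not_0_INR; discriminate).
  field. auto.
Qed.

Lemma pw n : is_RInt (fun t => t ^ n) 0 (-1) ((-1) ^ (S n) / INR (S n)).
Proof.
  eapply is_RInt_val.
  - apply (is_RInt_derive (fun t => t ^ S n / INR (S n))).
    + intros s _. auto_derive; auto.
      change (match n with 0%nat => 1 | S _ => INR n + 1 end) with (INR (S n)).
      cbn [pow]. field. apply not_0_INR; discriminate.
    + intros s _. apply cont_of_der. auto_derive. auto.
  - unfold minus, plus, opp; simpl.
    change (match n with 0%nat => 1 | S _ => INR n + 1 end) with (INR (S n)).
    field. apply not_0_INR; discriminate.
Qed.

Lemma P2 N : is_RInt (PN N) 0 (-1) (sum_n bfun N).
Proof.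
  induction N as [|N IH].
  - rewrite sum_O, b_eq. eapply is_RInt_val; [eapply ext_R; [|exact (is_RInt_scal _ _ _ (T (-1) 0) _ (pw 0))]|].
    + intros; unfold PN, scal; simpl; unfold mult; simpl. reflexivity.
    + reflexivity.
  - rewrite sum_Sn, b_eq.
    pose proof (is_RInt_plus _ _ _ _ _ _ IH (is_RInt_scal _ _ _ (T (-1) (S N)) _ (pw (S N)))) as H.
    eapply is_RInt_val; [eapply ext_R; [|exact H]|].
    + intros; unfold PN, plus, scal; simpl; unfold mult; simpl. reflexivity.
    + reflexivity.
Qed.

Lemma key N t : (1 - t) * PN N t = T (- t) N - T (-1) N * t ^ (S N).
Proof.
  induction N as [|N IH].
  - unfold PN, T; simpl. field.
  - unfold PN in *. cbn [sum_f_R0]. rewrite Rmult_plus_distr_l, IH.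
    unfold T; cbn [sum_f_R0]. fold (T (-1) N). fold (T (-t) N).
    assert (E : (- t) ^ S N = (-1) ^ S N * t ^ S N)
      by (replace (- t) with (-1 * t) by ring; apply Rpow_mult_distr).
    rewrite E. change (t ^ S (S N)) with (t * t ^ S N).
    assert (Hf := INR_fact_neq_0 (S N)). field. auto.
Qed.

Lemma T_bound N : Rabs (T (-1) N) <= 4.
Proof.
  pose proof (taylor_bound (-1) N) as H. replace (Rabs (-1)) with 1 in H by (rewrite Rabs_left; lra). rewrite pow1 in H.
  specialize (H ltac:(lra)).
  assert (E1 : exp (-1) <= 1) by (rewrite <- exp_0; apply exp_mono; lra).
  pose proof (exp_pos (-1)).
  unfold Rabs in *. repeat destruct Rcase_abs; lra.
Qed.

Lemma pt_bound N t : -1 <= t <= 0 -> Rabs (fI t - PN N t) <= 7 * (- t) ^ S N.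
Proof.
  intros Ht.
  assert (Hd : 1 - t <> 0) by lra.
  assert (E : fI t - PN N t = (exp (- t) - T (- t) N + T (-1) N * t ^ S N) * / (1 - t)).
  { apply (Rmult_eq_reg_l (1 - t)); auto. rewrite Rmult_minus_distr_l, key. unfold fI. field. auto. }
  rewrite E, Rabs_mult, (Rabs_pos_eq (/ (1 - t))) by (left; apply Rinv_0_lt_compat; lra).
  assert (I1 : / (1 - t) <= 1) by (rewrite <- Rinv_1; apply Rinv_le_contravar; lra).
  assert (I0 : 0 < / (1 - t)) by (apply Rinv_0_lt_compat; lra).
  pose proof (taylor_bound (- t) N) as TB. rewrite Rabs_Ropp in TB.
  replace (Rabs t) with (- t) in TB by (rewrite Rabs_left1; lra).
  specialize (TB ltac:(lra)).
  assert (Ep : Rabs (t ^ S N) = (- t) ^ S N) by (rewrite <- RPow_abs, Rabs_left1; [reflexivity|lra]).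
  pose proof (T_bound N) as TB2.
  pose proof (pow_le (- t) (S N) ltac:(lra)) as P0.
  set (p := (- t) ^ S N) in *.
  assert (Hn : Rabs (exp (- t) - T (- t) N + T (-1) N * t ^ S N) <= 7 * p).
  { eapply Rle_trans; [apply Rabs_triang|]. rewrite Rabs_mult, Ep.
    pose proof (Rabs_pos (T (-1) N)). nra. }
  pose proof (Rabs_pos (exp (- t) - T (- t) N + T (-1) N * t ^ S N)). nra.
Qed.

Lemma part2_lim : is_lim_seq (sum_n bfun) (RInt fI 0 (-1)).
Proof.
  apply lim_helper with (C := 7). intros N. rewrite Rabs_minus_sym.
  pose proof (is_RInt_minus_R _ _ _ _ _ _ (RInt_correct _ _ _ ex_fI) (P2 N)) as HM.
  rewrite <- (is_RInt_unique _ _ _ _ HM).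
  apply int_bound_rev with (k := fun s => 7 * (- s) ^ S N).
  - eexists; exact HM.
  - apply int_pow_neg.
  - intros t Ht. apply pt_bound; auto.
Qed.

Theorem mainTheorem13 :
  ex_RInt (fun t => exp (- t) / (1 - t)) 0 (-1) /\
  is_series (fun n => exp (-1) * INR (Factorial.fact n) - derangement n)
    (exp (-1) * RInt (fun t => exp (- t) / (1 - t)) 0 (-1)) /\
  is_series (fun n => derangement n * (-1) ^ (n + 1) / INR (Factorial.fact (n + 1)))
    (RInt (fun t => exp (- t) / (1 - t)) 0 (-1)).
Proof.
  split; [exact ex_fI|]. split.
  - apply ser. change (is_lim_seq (sum_n afun) (exp (-1) * RInt fI 0 (-1))).
    rewrite <- change_var. exact part1_lim.
  - apply ser. change (is_lim_seq (sum_n bfun) (RInt fI 0 (-1))). exact part2_lim.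
Qed.
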